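(* Let $f\in\mathbf{C}\{X,Y\}$ be a nonzero power series without constant term such that the curve $f=0$ is reduced, and let $l\in\mathbf{C}\{X,Y\}$ be a power series without constant term with $\operatorname{ord} l=1$. Let $J(f,l)=\frac{\partial f}{\partial X}\frac{\partial l}{\partial Y}-\frac{\partial f}{\partial Y}\frac{\partial l}{\partial X}$ and assume $J(f,l)(0,0)=0$. Then $l$ does not divide $f$ in $\mathbf{C}\{X,Y\}$ (i.e. $l=0$ is not a branch of $f=0$) if and only if $l$ does not divide $J(f,l)$ (i.e. $l=0$ is not a branch of the curve $J(f,l)=0$).
   Context: $\mathbf{C}\{X,Y\}$ denotes the ring of convergent complex power series in $X,Y$. A curve $f=0$ is reduced if $f$ has no multiple irreducible factors; the branches of $f=0$ are the curves $f_i=0$ for the irreducible factors $f_i$ of $f$. The curve $l=0$ with $\operatorname{ord} l=1$ is called regular. *)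

(* Defs.v *)
From mathcomp Require Import all_boot all_algebra complex reals.
Set Implicit Arguments. Unset Strict Implicit. Unset Printing Implicit Defensive.
Import GRing.Theory Num.Theory.
Local Open Scope ring_scope.

Section ConvPS.
Variable R : realType.
Local Notation C := R[i].

(* A formal power series in X,Y : coefficient of X^i Y^j is  s i j. *)
Definition ps := nat -> nat -> C.

(* Convergent: absolutely convergent on some polydisc, i.e. coefficients
   satisfy a Cauchy bound |a_ij| r^(i+j) <= M for some r > 0. *)
Definition ps_conv (s : ps) : Prop :=
  exists r M : C, 0 < r /\ forall i j, `|s i j| * r ^+ (i + j) <= M.

Definition ps_eq (s t : ps) : Prop := forall i j, s i j = t i j.
Definition ps_zero : ps := fun _ _ => 0.
Definition ps_one : ps := fun i j => if (i == 0%N) && (j == 0%N) then 1 else 0.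

Definition ps_mul (s t : ps) : ps := fun i j =>
  \sum_(k < i.+1) \sum_(m < j.+1) s k m * t (i - k)%N (j - m)%N.

Definition ps_sub (s t : ps) : ps := fun i j => s i j - t i j.

Definition ps_dX (s : ps) : ps := fun i j => s i.+1 j *+ i.+1.
Definition ps_dY (s : ps) : ps := fun i j => s i j.+1 *+ j.+1.

Definition jac (f l : ps) : ps :=
  ps_sub (ps_mul (ps_dX f) (ps_dY l)) (ps_mul (ps_dY f) (ps_dX l)).

Definition ps_at0 (s : ps) : C := s 0%N 0%N.

Definition ps_dvd (a b : ps) : Prop := exists g, ps_conv g /\ ps_eq b (ps_mul a g).

Definition ps_unit (a : ps) : Prop := exists g, ps_conv g /\ ps_eq (ps_mul a g) ps_one.

Definition ps_irreducible (p : ps) : Prop :=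
  [/\ ps_conv p, ~ ps_eq p ps_zero, ~ ps_unit p &
      forall a b, ps_conv a -> ps_conv b -> ps_eq p (ps_mul a b) ->
        ps_unit a \/ ps_unit b].

Definition ps_reduced (f : ps) : Prop :=
  forall p, ps_irreducible p -> ~ ps_dvd (ps_mul p p) f.

Definition ps_ord1 (l : ps) : Prop :=
  l 0%N 0%N = 0 /\ (l 1%N 0%N != 0 \/ l 0%N 1%N != 0).

End ConvPS.

(* Main.v *)
From HB Require Import structures.
Require Import Defs.
From mathcomp Require Import all_boot all_algebra complex reals.
From mathcomp Require Import boolp ring lra zify.
From Stdlib Require Import FunctionalExtensionality.
From mathcomp Require Import all_order.
Import Order.TTheory GRing.Theory Num.Theory.
Local Open Scope ring_scope.

Section PSring.
Variable R : realType.
Local Notation C := R[i].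
Local Notation ps := (ps R).

Definition P (N : nat) (s : ps) : {poly {poly C}} := \poly_(i < N) \poly_(j < N) s i j.

Lemma coefP N s i j : ((P N s)`_i)`_j = if ((i < N) && (j < N))%N then s i j else 0.
Proof.
rewrite /P coef_poly; case: (i < N)%N => /=; last by rewrite coef0.
by rewrite coef_poly.
Qed.

Lemma agreeP N s i j : (i < N)%N -> (j < N)%N -> ((P N s)`_i)`_j = s i j.
Proof. by move=> hi hj; rewrite coefP hi hj. Qed.

Lemma coefMM (p q : {poly {poly C}}) i j : ((p * q)`_i)`_j =
  \sum_(k < i.+1) \sum_(m < j.+1) (p`_k)`_m * (q`_(i - k))`_(j - m).
Proof.
rewrite coefM coef_sum; apply: eq_bigr => k _; by rewrite coefM.
Qed.

Lemma Bmul (p q : {poly {poly C}}) (s t : ps) i j :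
  (forall k m, (k <= i)%N -> (m <= j)%N -> (p`_k)`_m = s k m) ->
  (forall k m, (k <= i)%N -> (m <= j)%N -> (q`_k)`_m = t k m) ->
  ((p * q)`_i)`_j = ps_mul s t i j.
Proof.
move=> hp hq; rewrite coefMM /ps_mul; apply: eq_bigr => k _; apply: eq_bigr => m _.
have hk : (k <= i)%N by rewrite -ltnS ltn_ord.
have hm : (m <= j)%N by rewrite -ltnS ltn_ord.
by rewrite hp // hq // leq_subr.
Qed.

Lemma agreeMul N s t i j : (i < N)%N -> (j < N)%N ->
  ((P N s * P N t)`_i)`_j = ps_mul s t i j.
Proof.
move=> hi hj; apply: Bmul => k m hk hm; apply: agreeP;
  by [apply: leq_ltn_trans hk hi | apply: leq_ltn_trans hm hj].
Qed.

Definition padd (s t : ps) : ps := fun i j => s i j + t i j.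
Definition popp (s : ps) : ps := fun i j => - s i j.

Lemma paddA : associative padd.
Proof. by move=> a b c; do 2 apply: functional_extensionality => ?; rewrite /padd addrA. Qed.
Lemma paddC : commutative padd.
Proof. by move=> a b; do 2 apply: functional_extensionality => ?; rewrite /padd addrC. Qed.
Lemma padd0 : left_id (ps_zero R) padd.
Proof. by move=> a; do 2 apply: functional_extensionality => ?; rewrite /padd /ps_zero add0r. Qed.
Lemma paddN : left_inverse (ps_zero R) popp padd.
Proof. by move=> a; do 2 apply: functional_extensionality => ?; rewrite /padd /popp /ps_zero addNr. Qed.

Lemma pmulA : associative (@ps_mul R).
Proof.
move=> s t u; apply: functional_extensionality => i; apply: functional_extensionality => j.
pose N := (i + j).+1.
have hiN : (i < N)%N by rewrite /N ltnS leq_addr.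
have hjN : (j < N)%N by rewrite /N ltnS leq_addl.
transitivity (((P N s * (P N t * P N u))`_i)`_j).
  symmetry. apply: (Bmul _ _ (s) (ps_mul t u)) => k m hk hm.
  - apply: agreeP; [exact: leq_ltn_trans hk hiN | exact: leq_ltn_trans hm hjN].
  - apply: agreeMul; [exact: leq_ltn_trans hk hiN | exact: leq_ltn_trans hm hjN].
rewrite mulrA; apply: (Bmul _ _ (ps_mul s t) (u)) => k m hk hm.
  - apply: agreeMul; [exact: leq_ltn_trans hk hiN | exact: leq_ltn_trans hm hjN].
  - apply: agreeP; [exact: leq_ltn_trans hk hiN | exact: leq_ltn_trans hm hjN].
Qed.

Lemma pmulC : commutative (@ps_mul R).
Proof.
move=> s t; apply: functional_extensionality => i; apply: functional_extensionality => j.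
pose N := (i + j).+1.
have hiN : (i < N)%N by rewrite /N ltnS leq_addr.
have hjN : (j < N)%N by rewrite /N ltnS leq_addl.
by rewrite -(@agreeMul N s t i j hiN hjN) mulrC agreeMul.
Qed.

Lemma pmul1 : left_id (ps_one R) (@ps_mul R).
Proof.
move=> s; apply: functional_extensionality => i; apply: functional_extensionality => j.
pose N := (i + j).+1.
have hiN : (i < N)%N by rewrite /N ltnS leq_addr.
have hjN : (j < N)%N by rewrite /N ltnS leq_addl.
rewrite -(@agreeP N s i j hiN hjN) -[P N s]mul1r; symmetry; apply: (Bmul _ _ (ps_one R) (s)) => k m hk hm.
  by rewrite coef1; case: k {hk} => [|k] /=; rewrite ?coef1 ?coef0 /ps_one //=; case: m {hm}.
apply: agreeP; [exact: leq_ltn_trans hk hiN | exact: leq_ltn_trans hm hjN].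
Qed.

Lemma pmulDl : left_distributive (@ps_mul R) padd.
Proof.
move=> s t u; apply: functional_extensionality => i; apply: functional_extensionality => j.
pose N := (i + j).+1.
have hiN : (i < N)%N by rewrite /N ltnS leq_addr.
have hjN : (j < N)%N by rewrite /N ltnS leq_addl.
transitivity ((((P N s + P N t) * P N u)`_i)`_j).
  symmetry; apply: (Bmul _ _ (padd s t) (u)) => k m hk hm.
  - rewrite coefD coefD !agreeP //; (exact: leq_ltn_trans hk hiN || exact: leq_ltn_trans hm hjN).
  - apply: agreeP; [exact: leq_ltn_trans hk hiN | exact: leq_ltn_trans hm hjN].
by rewrite mulrDl coefD coefD !agreeMul.
Qed.

Lemma pone_neq0 : ps_one R != ps_zero R.
Proof.
apply/eqP => h; have := congr1 (fun s => s 0%N 0%N) h; rewrite /ps_one /ps_zero /=.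
by move/eqP; rewrite oner_eq0.
Qed.

End PSring.

HB.instance Definition _ (R : realType) := gen_eqMixin (ps R).
HB.instance Definition _ (R : realType) := gen_choiceMixin (ps R).
HB.instance Definition _ (R : realType) :=
  GRing.isZmodule.Build (ps R) (@paddA R) (@paddC R) (@padd0 R) (@paddN R).
HB.instance Definition _ (R : realType) :=
  GRing.Zmodule_isComNzRing.Build (ps R) (@pmulA R) (@pmulC R) (@pmul1 R) (@pmulDl R) (@pone_neq0 R).

Arguments P {R}.
Arguments agreeP {R}.
Arguments agreeMul {R}.
Arguments Bmul {R}.
Section Deriv.
Variable R : realType.
Local Notation C := R[i].
Local Notation ps := (ps R).

Lemma psE (a b : ps) : ps_mul a b = a * b. Proof. by []. Qed.
Lemma psaddE (a b : ps) i j : (a + b) i j = a i j + b i j. Proof. by []. Qed.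
Lemma psoppE (a : ps) i j : (- a) i j = - a i j. Proof. by []. Qed.
Lemma pssubE (a b : ps) i j : (a - b) i j = a i j - b i j. Proof. by []. Qed.
Lemma ps0E i j : (0 : ps) i j = 0. Proof. by []. Qed.
Lemma pseqP (a b : ps) : ps_eq a b <-> a = b.
Proof.
split=> [h|-> //]; apply: functional_extensionality => i;
  apply: functional_extensionality => j; exact: h.
Qed.

Definition sw (s : ps) : ps := fun i j => s j i.

Lemma swK (s : ps) : sw (sw s) = s. Proof. by []. Qed.
Lemma swD (a b : ps) : sw (a + b) = sw a + sw b. Proof. by []. Qed.
Lemma swN (a : ps) : sw (- a) = - sw a. Proof. by []. Qed.

Lemma swM (a b : ps) : sw (a * b) = sw a * sw b.
Proof.
apply: functional_extensionality => i; apply: functional_extensionality => j.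
rewrite /sw -!psE /ps_mul exchange_big /=; by [].
Qed.

Lemma dXD (a b : ps) : ps_dX (a + b) = ps_dX a + ps_dX b.
Proof.
apply: functional_extensionality => i; apply: functional_extensionality => j.
by rewrite /ps_dX !psaddE mulrnDl.
Qed.

Lemma dXN (a : ps) : ps_dX (- a) = - ps_dX a.
Proof.
apply: functional_extensionality => i; apply: functional_extensionality => j.
by rewrite /ps_dX !psoppE mulNrn.
Qed.

Lemma dYsw (a : ps) : ps_dY a = sw (ps_dX (sw a)). Proof. by []. Qed.

Lemma dXM (s t : ps) : ps_dX (s * t) = ps_dX s * t + s * ps_dX t.
Proof.
apply: functional_extensionality => i; apply: functional_extensionality => j.
pose N := (i + j).+2.
have hiN : (i.+1 < N)%N by rewrite /N !ltnS leq_addr.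
have hjN : (j < N)%N by rewrite /N ltnS ltnW // ltnS leq_addl.
have ag k m : (k <= i)%N -> (m <= j)%N -> (((P N s)^`())`_k)`_m = ps_dX s k m.
  move=> hk hm; rewrite coef_deriv coefMn agreeP //; rewrite /N; lia.
have ag' k m : (k <= i)%N -> (m <= j)%N -> (((P N t)^`())`_k)`_m = ps_dX t k m.
  move=> hk hm; rewrite coef_deriv coefMn agreeP //; rewrite /N; lia.
have agp (u : ps) k m : (k <= i)%N -> (m <= j)%N -> ((P N u)`_k)`_m = u k m.
  move=> hk hm; rewrite agreeP //; rewrite /N; lia.
rewrite /ps_dX -psE -(@agreeMul R N s t i.+1 j hiN hjN) -coefMn -coef_deriv derivM.
rewrite psaddE coefD coefD -!psE.
by rewrite (Bmul _ _ (ps_dX s) t i j ag (agp t)) (Bmul _ _ s (ps_dX t) i j (agp s) ag').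
Qed.

Lemma dYM (s t : ps) : ps_dY (s * t) = ps_dY s * t + s * ps_dY t.
Proof. by rewrite !dYsw swM dXM swD !swM. Qed.

Lemma dYD (a b : ps) : ps_dY (a + b) = ps_dY a + ps_dY b.
Proof. by rewrite !dYsw swD dXD. Qed.

Lemma jacE (f l : ps) : jac f l = ps_dX f * ps_dY l - ps_dY f * ps_dX l.
Proof. by []. Qed.

Lemma jac_div (f l q r : ps) : f = l * q + r ->
  jac f l = l * jac q l + (ps_dX r * ps_dY l - ps_dY r * ps_dX l).
Proof.
move=> ->; rewrite !jacE dXD dYD dXM dYM; ring.
Qed.

Lemma jac_sw (f l : ps) : jac (sw f) (sw l) = - sw (jac f l).
Proof.
have e1 (a : ps) : ps_dX (sw a) = sw (ps_dY a) by [].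
have e2 (a : ps) : ps_dY (sw a) = sw (ps_dX a) by [].
rewrite !jacE !e1 !e2 swD swN !swM; ring.
Qed.

End Deriv.
Arguments sw {R}.
Set Implicit Arguments. Unset Strict Implicit.
Section Norm.
Variable R : realType.
Definition nc (z : R[i]) : R := ComplexField.Normc.normc z.
Lemma nc_ge0 z : 0 <= nc z. Proof. case: z => a b; rewrite /nc /=; exact: sqrtr_ge0. Qed.
Lemma ncD x y : nc (x + y) <= nc x + nc y. Proof. exact: le_normcD. Qed.
Lemma ncM x y : nc (x * y) = nc x * nc y. Proof. exact: ComplexField.Normc.normcM. Qed.
Lemma ncN x : nc (- x) = nc x. Proof. exact: normcN. Qed.
Lemma ncMn x n : nc (x *+ n) = nc x *+ n. Proof. exact: normcMn. Qed.
Lemma nc_eq0 x : nc x = 0 -> x = 0. Proof. exact: ComplexField.Normc.eq0_normc. Qed.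
Lemma nc0 : nc 0 = 0. Proof. exact: ComplexField.Normc.normc0. Qed.
Lemma nc_sum n (F : 'I_n -> R[i]) : nc (\sum_(i < n) F i) <= \sum_(i < n) nc (F i).
Proof.
elim/big_rec2: _ => [|i y1 y2 _ h]; first by rewrite nc0.
by apply: le_trans (ncD _ _) _; rewrite lerD2l.
Qed.
Lemma nc_sum_le n (F : 'I_n -> R[i]) (G : 'I_n -> R) :
  (forall k, nc (F k) <= G k) -> nc (\sum_(i < n) F i) <= \sum_(i < n) G i.
Proof. by move=> h; apply: le_trans (nc_sum F) _; apply: ler_sum => k _. Qed.
Lemma nc_norm (z : R[i]) : `|z| = (nc z)%:C%C. Proof. by []. Qed.
End Norm.

Section Conv.
Variable R : realType.
Local Notation C := R[i].
Local Notation ps := (ps R).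

Definition bnd (s : ps) (K M : R) := forall i j, nc (s i j) <= M * K ^+ (i + j).
Definition cv (s : ps) := exists K M : R, [/\ 1 <= K, 0 <= M & bnd s K M].

Lemma bnd_mono s K M K' M' : 1 <= K -> 0 <= M -> K <= K' -> M <= M' ->
  bnd s K M -> bnd s K' M'.
Proof.
move=> hK hM hKK hMM h i j; apply: le_trans (h i j) _.
apply: ler_pM => //; first by apply: exprn_ge0; lra.
by apply: lerXn2r => //; rewrite nnegrE; lra.
Qed.

Lemma conv_cv s : ps_conv s -> cv s.
Proof.
case=> r [M [r0 h]]; case: r r0 h => a b; rewrite ltcE /= => /andP[/eqP b0 a0] h.
subst b; case: M h => m1 m2 h.
have hb i j : nc (s i j) * a ^+ (i + j) <= m1.
  have := h i j; rewrite nc_norm complexr0 -rmorphXn -rmorphM lecE /=.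
  by case/andP.
have hM : 0 <= m1 by have := hb 0%N 0%N; rewrite expr0 mulr1; apply: le_trans; exact: nc_ge0.
have ai : 0 < a^-1 by rewrite invr_gt0.
exists (1 + a^-1), m1; split => //; first lra.
move=> i j.
have h1 : nc (s i j) <= m1 / a ^+ (i + j) by rewrite ler_pdivlMr ?exprn_gt0.
apply: le_trans h1 _; rewrite -exprVn; apply: ler_wpM2l => //.
apply: lerXn2r; rewrite ?nnegrE; lra.
Qed.

Lemma cv_conv s : cv s -> ps_conv s.
Proof.
case=> K [M [hK hM hb]].
have K0 : 0 < K by lra.
exists (K^-1)%:C%C, M%:C%C; split.
  by rewrite ltcE /= eqxx /= invr_gt0.
move=> i j; rewrite nc_norm -rmorphXn -rmorphM lecR exprVn.
by rewrite ler_pdivrMr ?exprn_gt0.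
Qed.

Lemma cv_common a b : cv a -> cv b ->
  exists K M : R, [/\ 1 <= K, 0 <= M, bnd a K M & bnd b K M].
Proof.
case=> K1 [M1 [h1 h1' ha]] [K2 [M2 [h2 h2' hb]]].
exists (K1 + K2), (M1 + M2); split; try lra.
  by apply: bnd_mono ha; lra.
by apply: bnd_mono hb; lra.
Qed.

Lemma cv_add a b : cv a -> cv b -> cv (a + b).
Proof.
move=> ha hb; have [K [M [hK hM ba bb]]] := cv_common ha hb.
exists K, (M + M); split; try lra.
move=> i j; rewrite psaddE; apply: le_trans (ncD _ _) _.
by rewrite mulrDl lerD.
Qed.

Lemma cv_opp a : cv a -> cv (- a).
Proof. by case=> K [M [hK hM ha]]; exists K, M; split => // i j; rewrite psoppE ncN. Qed.

Lemma cv_sub a b : cv a -> cv b -> cv (a - b).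
Proof. by move=> ha hb; apply: cv_add ha (cv_opp hb). Qed.

Lemma cv_sw a : cv a -> cv (sw a).
Proof. by case=> K [M [hK hM ha]]; exists K, M; split => // i j; rewrite /sw addnC. Qed.

Lemma nat_le2 n : (n.+1)%:R <= (2 : R) ^+ n.
Proof. by rewrite -natrX ler_nat; apply: ltn_expl. Qed.

Lemma cv_mul a b : cv a -> cv b -> cv (a * b).
Proof.
move=> ha hb; have [K [M [hK hM ba bb]]] := cv_common ha hb.
exists (2 * K), (M * M); split; [lra | exact: mulr_ge0 |].
move=> i j; rewrite -psE /ps_mul.
apply: (@le_trans _ _ (\sum_(k < i.+1) \sum_(m < j.+1) (M * M * K ^+ (i + j)))).
  apply: nc_sum_le => k; apply: nc_sum_le => m; rewrite ncM.
  have hk : (k <= i)%N by rewrite -ltnS ltn_ord.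
  have hm : (m <= j)%N by rewrite -ltnS ltn_ord.
  have -> : M * M * K ^+ (i + j) = (M * K ^+ (k + m)) * (M * K ^+ (i - k + (j - m))).
    have e : (i + j = k + m + (i - k + (j - m)))%N by lia.
    by rewrite mulrACA -exprD -e.
  apply: ler_pM; [exact: nc_ge0 | exact: nc_ge0 | exact: (ba k m) | exact: (bb (i - k)%N (j - m)%N)].
rewrite !sumr_const !card_ord -mulrnA -(mulr_natr (M * M * K ^+ (i + j))) exprMn exprD.
have h2 : 0 <= M * M * K ^+ (i + j) by apply: mulr_ge0; [apply: mulr_ge0 | apply: exprn_ge0; lra].
have hi := nat_le2 i; have hj := nat_le2 j.
have -> : M * M * (2 ^+ (i + j) * (K ^+ i * K ^+ j)) = M * M * (K ^+ i * K ^+ j) * (2 ^+ i * 2 ^+ j) by rewrite exprD; ring.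
rewrite -exprD; apply: ler_wpM2l => //; rewrite natrM mulrC.
by apply: ler_pM.
Qed.

Lemma cv_dX a : cv a -> cv (ps_dX a).
Proof.
case=> K [M [hK hM ha]].
exists (2 * K), (M * K); split.
- lra.
- by apply: mulr_ge0 => //; lra.
move=> i j; rewrite /ps_dX ncMn -(mulr_natr (nc _)).
have := ha i.+1 j; rewrite addSn exprS => h.
have hi := nat_le2 i.
have h1 : (2 : R) ^+ i <= 2 ^+ (i + j) by apply: ler_weXn2l; [lra | apply: leq_addr].
have h2 : 0 <= M * (K * K ^+ (i + j)).
  by apply: mulr_ge0 => //; apply: mulr_ge0; [lra | apply: exprn_ge0; lra].
apply: le_trans (ler_pM (nc_ge0 _) (ler0n _ _) h hi) _.
apply: le_trans (ler_wpM2l h2 h1) _.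
by rewrite exprMn le_eqVlt; apply/orP; left; apply/eqP; ring.
Qed.

Lemma cv_dY a : cv a -> cv (ps_dY a).
Proof. by move=> ha; rewrite dYsw; apply/cv_sw/cv_dX/cv_sw. Qed.

Lemma cv_jac f l : cv f -> cv l -> cv (jac f l).
Proof.
move=> hf hl; rewrite jacE; apply: cv_sub; apply: cv_mul;
  by [apply: cv_dX | apply: cv_dY].
Qed.

End Conv.

Set Implicit Arguments. Unset Strict Implicit.

Section Geo.
Variable R : realType.
Lemma geo n : \sum_(k < n) (2^-1 : R) ^+ k <= 2.
Proof.
have e : forall p, \sum_(k < p) (2^-1 : R) ^+ k = 2 - 2 * (2^-1) ^+ p.
  elim=> [|p IH]; first by rewrite big_ord0 expr0; ring.
  have h2 : 2 * 2^-1 = 1 :> R by rewrite divff // pnatr_eq0.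
  rewrite big_ord_recr /= IH exprS mulrA h2 mul1r; ring.
rewrite e; have : 0 <= (2^-1 : R) ^+ n by apply: exprn_ge0; rewrite invr_ge0.
lra.
Qed.

Lemma geo2 a c : \sum_(k < a) \sum_(m < c) (2^-1 : R) ^+ (k + m) <= 4.
Proof.
apply: (@le_trans _ _ (\sum_(k < a) (2^-1 : R) ^+ k * 2)).
  apply: ler_sum => k _; rewrite (eq_bigr (fun m : 'I_c => (2^-1 : R) ^+ k * (2^-1) ^+ m)); last by move=> m _; rewrite exprD.
  rewrite -mulr_sumr; apply: ler_wpM2l; [by apply: exprn_ge0; rewrite invr_ge0 | exact: geo].
rewrite -mulr_suml; have := geo a; lra.
Qed.

Lemma core (K S : R) k m : 1 <= K -> 2 * K <= S -> (0 < k \/ 1 < m)%N ->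
  (2 * K) ^+ (k + m) * S <= 4 * K ^+ 2 * S ^+ (2 * k + m - 1).
Proof.
move=> hK hS hkm.
have S1 : 1 <= S by lra.
have hp n : (2 * K) ^+ n <= S ^+ n by apply: lerXn2r; rewrite ?nnegrE; lra.
have hp0 n : 0 <= (2 * K) ^+ n by apply: exprn_ge0; lra.
have hs0 n : 0 <= S ^+ n by apply: exprn_ge0; lra.
have hK2 : 0 <= K ^+ 2 by apply: exprn_ge0; lra.
case: k hkm => [|k] hkm.
  case: m hkm => [|[|m]] hkm; [by case: hkm | by case: hkm |].
  have -> : (2 * 0 + m.+2 - 1 = m.+1)%N by lia.
  rewrite add0n !exprS.
  have -> : 2 * K * (2 * K * (2 * K) ^+ m) * S = (4 * (K * (K * K ^+ 0))) * ((2 * K) ^+ m * S) by ring.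
  apply: ler_wpM2l; first by rewrite expr0 mulr1; nra.
  rewrite mulrC; apply: ler_wpM2l; [lra | exact: hp].
have -> : (2 * k.+1 + m - 1 = (2 * k + m).+1)%N by lia.
rewrite addSn (exprS (2 * K)) (exprS S).
have h1 : (2 * K) ^+ (k + m) <= S ^+ (2 * k + m).
  apply: le_trans (hp _) _; apply: ler_weXn2l => //; lia.
have h2 : 2 * K <= 4 * K ^+ 2 by rewrite expr2; nra.
have -> : 2 * K * (2 * K) ^+ (k + m) * S = ((2 * K) ^+ (k + m) * (2 * K)) * S by ring.
have -> : 4 * K ^+ 2 * (S * S ^+ (2 * k + m)) = (S ^+ (2 * k + m) * (4 * K ^+ 2)) * S by ring.
apply: ler_wpM2r; first lra.
apply: ler_pM => //; lra.
Qed.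
Lemma ncV (x : R[i]) : nc x^-1 = (nc x)^-1.
Proof. exact: ComplexField.Normc.normcV. Qed.
End Geo.

Section Div.
Variable R : realType.
Local Notation C := R[i].
Local Notation ps := (ps R).
Variables (l f : ps).
Hypothesis l00 : l 0%N 0%N = 0.
Hypothesis hb : l 0%N 1%N != 0.
Local Notation b := (l 0%N 1%N).

Definition oth (q : ps) i j := \sum_(k < i.+1) \sum_(m < j.+2)
  (if ((k : nat) == 0%N) && (m <= 1)%N then 0 else l k m * q (i - k)%N (j.+1 - m)%N).

Lemma mul_decomp q i j : ps_mul l q i j.+1 = b * q i j + oth q i j.
Proof.
rewrite /ps_mul /oth /=.
transitivity (\sum_(k < i.+1) (\sum_(m < j.+2)
   (if ((k : nat) == 0%N) && (m <= 1)%N then l k m * q (i - k)%N (j.+1 - m)%N else 0)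
  + \sum_(m < j.+2) (if ((k : nat) == 0%N) && (m <= 1)%N then 0 else l k m * q (i - k)%N (j.+1 - m)%N))).
  apply: eq_bigr => k _; rewrite -big_split /=; apply: eq_bigr => m _.
  by case: ifP => _; rewrite ?addr0 ?add0r.
rewrite big_split /=; congr (_ + _).
rewrite big_ord_recl /= !big1_eq addr0.
rewrite big_ord_recl big_ord_recl /=.
rewrite (eq_bigr (fun _ => 0)); last by move=> m _; rewrite /bump /=.
rewrite big1_eq addr0.
by rewrite l00 mul0r add0r subn0 subSS subn0.
Qed.

Lemma oth_local q q' i j :
  (forall i' j', (2 * i' + j' < 2 * i + j)%N -> q i' j' = q' i' j') ->
  oth q i j = oth q' i j.
Proof.
move=> h; apply: eq_bigr => k _; apply: eq_bigr => m _.
case: ifP => // /negbT hc; congr (_ * _); apply: h.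
have hk : (k <= i)%N by rewrite -ltnS ltn_ord.
have hm : (m <= j.+1)%N by rewrite -ltnS ltn_ord.
move: hc; rewrite negb_and -ltnNge; case/orP => [hk0|hm1]; last lia.
have : (0 < k)%N by rewrite lt0n. lia.
Qed.

Definition Phi (q : ps) : ps := fun i j => (f i j.+1 - oth q i j) / b.

Fixpoint T (n : nat) : ps := if n is n'.+1 then Phi (T n') else (fun _ _ => 0).

Definition qd : ps := fun i j => T (2 * i + j).+1 i j.

Lemma T_stab n i j : (2 * i + j < n)%N -> T n i j = T n.+1 i j.
Proof.
elim: n i j => [//|n IH] i j h.
rewrite [T n.+1]/= [T n.+2]/= /Phi (oth_local (q' := T n.+1)) //.
move=> i' j' h'; apply: IH; lia.
Qed.

Lemma T_stab' d n i j : (2 * i + j < n)%N -> T n i j = T (n + d) i j.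
Proof.
elim: d => [|d IH] h; first by rewrite addn0.
by rewrite IH // addnS T_stab //; lia.
Qed.

Lemma qd_T w i j : (2 * i + j < w)%N -> T w i j = qd i j.
Proof.
move=> h; rewrite /qd (T_stab' (w - (2 * i + j).+1) (i:=i) (j:=j) (n:=(2 * i + j).+1)) //.
by rewrite subnKC.
Qed.

Lemma qd_eq i j : f i j.+1 = ps_mul l qd i j.+1.
Proof.
rewrite mul_decomp.
have -> : qd i j = (f i j.+1 - oth qd i j) / b.
  rewrite {1}/qd [T _]/= /Phi (oth_local (q' := qd)) // => i' j' h.
  by apply: qd_T.
by field.
Qed.

Variables K M : R.
Hypotheses (hK : 1 <= K) (hM : 0 <= M) (hlb : bnd l K M) (hfb : bnd f K M).
Local Notation nb := (nc b).
Local Notation h := (2^-1 : R).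

Lemma nb_gt0 : 0 < nb.
Proof.
move: (hK) (hM) => hK1 hM1.
rewrite lt_def nc_ge0 andbT; apply/eqP => e; move/eqP: hb; apply; exact: nc_eq0.
Qed.

Definition S := 2 * K + 32 * M * K ^+ 2 / nb.
Definition A := 2 * M * S / nb.

Lemma S_ge : 2 * K <= S.
Proof.
move: (hK) (hM) => hK1 hM1.
rewrite /S lerDl; apply: divr_ge0; last exact: ltW nb_gt0.
by apply: mulr_ge0; [apply: mulr_ge0 | apply: exprn_ge0; lra].
Qed.

Lemma S_ge2 : 32 * M * K ^+ 2 <= nb * S.
Proof.
move: (hK) (hM) => hK1 hM1.
have nb0 := nb_gt0.
rewrite /S mulrDr [nb * (_ / nb)]mulrC divfK; last by rewrite gt_eqF.
have : 0 <= nb * (2 * K) by apply: mulr_ge0; lra.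
lra.
Qed.

Lemma S_gt0 : 0 < S. Proof. move: (hK) => hK1; have := S_ge; lra. Qed.

Lemma A_ge0 : 0 <= A.
Proof.
move: (hK) (hM) => hK1 hM1.
rewrite /A; apply: divr_ge0; last exact: ltW nb_gt0.
by apply: mulr_ge0; [lra | exact: ltW S_gt0].
Qed.

Lemma A_eq : A * nb = 2 * M * S.
Proof. by rewrite /A mulfVK // gt_eqF // nb_gt0. Qed.

Lemma term_bnd (q : ps) (hq : forall i j, nc (q i j) <= A * S ^+ (2 * i + j)) i j k m :
  (k <= i)%N -> (m <= j.+1)%N -> (0 < k \/ 1 < m)%N ->
  nc (l k m * q (i - k)%N (j.+1 - m)%N) * S <= 4 * M * A * K ^+ 2 * S ^+ (2 * i + j) * h ^+ (k + m).
Proof.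
move: (hK) (hM) => hK1 hM1.
move=> hk hm hkm; rewrite ncM.
set e := (2 * (i - k) + (j.+1 - m))%N.
have S0 := S_gt0; have A0 := A_ge0.
apply: (@le_trans _ _ (M * K ^+ (k + m) * (A * S ^+ e) * S)).
  apply: ler_wpM2r; first lra.
  by apply: ler_pM; [exact: nc_ge0 | exact: nc_ge0 | exact: hlb | exact: hq].
have eK : K ^+ (k + m) = (2 * K) ^+ (k + m) * h ^+ (k + m).
  by rewrite -exprMn; congr (_ ^+ _); field.
have eS : S ^+ (2 * i + j) = S ^+ e * S ^+ (2 * k + m - 1).
  by rewrite -exprD; congr (_ ^+ _); rewrite /e; lia.
rewrite eK eS.
have hc := core hK S_ge hkm.
have -> : M * ((2 * K) ^+ (k + m) * h ^+ (k + m)) * (A * S ^+ e) * S =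
  (M * A * S ^+ e * h ^+ (k + m)) * ((2 * K) ^+ (k + m) * S) by ring.
have -> : 4 * M * A * K ^+ 2 * (S ^+ e * S ^+ (2 * k + m - 1)) * h ^+ (k + m) =
  (M * A * S ^+ e * h ^+ (k + m)) * (4 * K ^+ 2 * S ^+ (2 * k + m - 1)) by ring.
apply: ler_wpM2l => //.
apply: mulr_ge0; last by apply: exprn_ge0; rewrite invr_ge0.
apply: mulr_ge0; [exact: mulr_ge0 | apply: exprn_ge0; lra].
Qed.

Lemma oth_bnd (q : ps) (hq : forall i j, nc (q i j) <= A * S ^+ (2 * i + j)) i j :
  nc (oth q i j) * S <= 16 * M * A * K ^+ 2 * S ^+ (2 * i + j).
Proof.
move: (hK) (hM) => hK1 hM1.
have S0 := S_gt0; have A0 := A_ge0.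
set D := 4 * M * A * K ^+ 2 * S ^+ (2 * i + j).
have D0 : 0 <= D.
  apply: mulr_ge0; last by apply: exprn_ge0; lra.
  apply: mulr_ge0; last by apply: exprn_ge0; lra.
  by apply: mulr_ge0 => //; apply: mulr_ge0 => //; lra.
have hh0 n : 0 <= h ^+ n by apply: exprn_ge0; rewrite invr_ge0.
have : nc (oth q i j) <= \sum_(k < i.+1) \sum_(m < j.+2) (D / S * h ^+ (k + m)).
  apply: nc_sum_le => k; apply: nc_sum_le => m.
  case: ifP => hc.
    rewrite nc0; apply: mulr_ge0 => //; apply: divr_ge0 => //; lra.
  rewrite mulrAC ler_pdivlMr //; apply: term_bnd => //.
  - by rewrite -ltnS ltn_ord.
  - by rewrite -ltnS ltn_ord.
  move/negbT: hc; rewrite negb_and -ltnNge; case/orP => [hk0|hm1]; last by right.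
  by left; rewrite lt0n.
have -> : \sum_(k < i.+1) \sum_(m < j.+2) (D / S * h ^+ (k + m)) =
  D / S * \sum_(k < i.+1) \sum_(m < j.+2) h ^+ (k + m).
  by rewrite mulr_sumr; apply: eq_bigr => k _; rewrite mulr_sumr.
move=> h1.
have h2 := geo2 R i.+1 j.+2.
have h3 : nc (oth q i j) <= D / S * 4.
  apply: le_trans h1 _; apply: ler_wpM2l => //; apply: divr_ge0 => //; lra.
have -> : 16 * M * A * K ^+ 2 * S ^+ (2 * i + j) = D / S * 4 * S.
  by rewrite /D; field; rewrite gt_eqF.
by apply: ler_wpM2r => //; lra.
Qed.

Lemma T_bnd n i j : nc (T n i j) <= A * S ^+ (2 * i + j).
Proof.
move: (hK) (hM) => hK1 hM1.
have S0 := S_gt0; have A0 := A_ge0; have nb0 := nb_gt0.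
have SX n' : 0 <= S ^+ n' by apply: exprn_ge0; lra.
elim: n i j => [|n IH] i j.
  have z : nc (T 0 i j) = 0 := nc0 R.
  by rewrite z; apply: mulr_ge0.
rewrite [T _]/= /Phi ncM ncV.
set X := S ^+ (2 * i + j).
have F1 : nc (f i j.+1) <= M * S * X.
  apply: le_trans (hfb i j.+1) _.
  have e : M * S * X = M * S ^+ (2 * i + j).+1 by rewrite /X exprS; ring.
  rewrite e; apply: ler_wpM2l => //.
  apply: (@le_trans _ _ (S ^+ (i + j.+1))).
    by apply: lerXn2r; rewrite ?nnegrE; have := S_ge; lra.
  by apply: ler_weXn2l; [have := S_ge; lra | lia].
have F2 := oth_bnd IH i j; rewrite -/X in F2.
have E1 := A_eq.
have E2 := S_ge2.
have G : nc (oth (T n) i j) <= A * nb * X / 2.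
  rewrite -(ler_pM2r S0); apply: le_trans F2 _.
  have -> : A * nb * X / 2 * S = (A * X) * (nb * S / 2) by ring.
  have -> : 16 * M * A * K ^+ 2 * X = (A * X) * (32 * M * K ^+ 2 / 2) by field.
  apply: ler_wpM2l; first by apply: mulr_ge0 => //; rewrite /X; exact: SX.
  by rewrite ler_pM2r //; rewrite invr_gt0.
have H : nc (f i j.+1 - oth (T n) i j) <= A * nb * X.
  apply: le_trans (ncD _ _) _; rewrite ncN.
  have : M * S * X = A * nb * X / 2 by rewrite E1; field.
  lra.
rewrite -ler_pdivlMr ?invr_gt0 // invrK.
have -> : A * X * nb = A * nb * X by ring.
by [].
Qed.

Lemma qd_cv : cv qd.
Proof.
move: (hK) (hM) => hK1 hM1.
have S0 := S_gt0; have A0 := A_ge0; have S1 : 1 <= S by have := S_ge; lra.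
exists (S ^+ 2), A; split => //; first by rewrite expr2; nra.
move=> i j; apply: le_trans (T_bnd _ _ _) _.
rewrite -exprM; apply: ler_wpM2l => //; apply: ler_weXn2l => //; lia.
Qed.

End Div.


Section Final.
Variable R : realType.
Local Notation C := R[i].
Local Notation ps := (ps R).

Lemma division (l f : ps) : l 0%N 0%N = 0 -> l 0%N 1%N != 0 -> cv l -> cv f ->
  exists q r : ps, [/\ cv q, (forall i j, r i j.+1 = 0) & f = l * q + r].
Proof.
move=> l00 hb hl hf.
have [K [M [hK hM bl bf]]] := cv_common hl hf.
exists (qd l f), (fun i j => if j is 0%N then f i 0%N - ps_mul l (qd l f) i 0%N else 0).
split; first exact: (qd_cv hb hK hM bl bf); first by [].
apply: functional_extensionality => i; apply: functional_extensionality => j.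
rewrite psaddE -psE; case: j => [|j].
  by rewrite addrC subrK.
by rewrite addr0 (qd_eq f l00 hb).
Qed.

Lemma uniq_div (l u s e : ps) : l 0%N 0%N = 0 -> l 0%N 1%N != 0 -> e 0%N 0%N != 0 ->
  (forall i j, s i j.+1 = 0) -> l * u = s * e -> forall i, s i 0%N = 0.
Proof.
move=> l00 hb he hs E.
suff H : forall i, s i 0%N = 0 /\ forall j, u i j = 0 by move=> i; case: (H i).
elim/ltn_ind => i IH.
have su k : (k < i)%N -> s k 0%N = 0 by move=> hk; case: (IH k hk).
have uk k j : (k < i)%N -> u k j = 0 by move=> hk; case: (IH k hk) => _ ->.
have E0 : ps_mul l u i 0%N = ps_mul s e i 0%N := congr1 (fun p : ps => p i 0%N) E.
have L0 : ps_mul l u i 0%N = 0.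
  rewrite /ps_mul /=; apply: big1 => k _; apply: big1 => m _.
  have -> : (m : nat) = 0%N by case: m => [[]].
  case: k => [[|k]] hk /=; first by rewrite l00 mul0r.
  by rewrite uk ?mulr0 //; lia.
have S0 : ps_mul s e i 0%N = s i 0%N * e 0%N 0%N.
  rewrite /ps_mul /= big_ord_recr /= big_ord1 subnn subnn.
  rewrite big1 ?add0r // => k _; rewrite big_ord1.
  by rewrite su ?mul0r // ltn_ord.
have si : s i 0%N = 0.
  move: E0; rewrite L0 S0 => /esym /eqP; rewrite mulf_eq0 (negbTE he) orbF.
  by move/eqP.
split => // j; elim/ltn_ind: j => j IHj.
have E1 : ps_mul l u i j.+1 = ps_mul s e i j.+1 := congr1 (fun p : ps => p i j.+1) E.
have R1 : ps_mul s e i j.+1 = 0.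
  rewrite /ps_mul /=; apply: big1 => k _; apply: big1 => m _.
  case: m => [[|m]] hm /=; last by rewrite hs mul0r.
  have hk : (k <= i)%N by rewrite -ltnS ltn_ord.
  move: hk; rewrite leq_eqVlt => /orP[/eqP ->|hk]; first by rewrite si mul0r.
  by rewrite su ?mul0r.
have O1 : oth l u i j = 0.
  rewrite /oth; apply: big1 => k _; apply: big1 => m _.
  case: ifP => // /negbT hc.
  have hk : (k <= i)%N by rewrite -ltnS ltn_ord.
  have hm : (m <= j.+1)%N by rewrite -ltnS ltn_ord.
  move: hc; rewrite negb_and -ltnNge; case/orP => [hk0|hm1].
    by rewrite uk ?mulr0 //; move: hk0; rewrite -lt0n => hk0; lia.
  case: (posnP k) => [ek|hk'].
    by rewrite ek subn0 IHj ?mulr0 //; lia.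
  by rewrite uk ?mulr0 //; lia.
move: E1; rewrite R1 (mul_decomp l00) O1 addr0 => /eqP; rewrite mulf_eq0 (negbTE hb) /=.
by move/eqP.
Qed.

End Final.

Section Final2.
Variable R : realType.
Local Notation C := R[i].
Local Notation ps := (ps R).

Lemma dX0 : ps_dX (0 : ps) = 0.
Proof.
by apply: functional_extensionality => i; apply: functional_extensionality => j; rewrite /ps_dX ps0E mul0rn.
Qed.
Lemma dY0 : ps_dY (0 : ps) = 0.
Proof.
by apply: functional_extensionality => i; apply: functional_extensionality => j; rewrite /ps_dY ps0E mul0rn.
Qed.

Lemma core_equiv (f l : ps) : ps_conv f -> ps_at0 f = 0 -> ps_conv l ->
  l 0%N 0%N = 0 -> l 0%N 1%N != 0 -> (ps_dvd l f <-> ps_dvd l (jac f l)).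
Proof.
move=> hf f00 hl l00 hb; have cf := conv_cv hf; have cl := conv_cv hl.
split.
  case=> g [hg /pseqP e].
  have e' : f = l * g + 0 by rewrite addr0.
  exists (jac g l); split; first exact: cv_conv (cv_jac (conv_cv hg) cl).
  apply/pseqP; rewrite (@jac_div R _ _ _ _ e') dX0 dY0 !mul0r subrr addr0; by [].
case=> k [hk /pseqP e].
have [q [r [cq hr er]]] := division l00 hb cl cf.
have dYr : ps_dY r = 0.
  by apply: functional_extensionality => i; apply: functional_extensionality => j; rewrite /ps_dY hr mul0rn.
have e2 : l * (k - jac q l) = ps_dX r * ps_dY l.
  move: e; rewrite psE (@jac_div R _ _ _ _ er) dYr mul0r subr0 => e.
  transitivity (l * k - l * jac q l); first ring.
  rewrite -e; ring.
have he : ps_dY l 0%N 0%N != 0 by rewrite /ps_dY.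
have hs : forall i j, ps_dX r i j.+1 = 0 by move=> i j; rewrite /ps_dX hr mul0rn.
have U := uniq_div l00 hb he hs e2.
have r0 : r = 0.
  apply: functional_extensionality => i; apply: functional_extensionality => j.
  case: j => [|j]; last by rewrite hr.
  case: i => [|i].
    have := congr1 (fun p : ps => p 0%N 0%N) er.
    rewrite /= psaddE -psE /ps_mul /= !big_ord1 l00 mul0r add0r.
    by move: f00; rewrite /ps_at0 => -> <-.
  have := U i; rewrite /ps_dX => /eqP; rewrite mulrn_eq0 /= => /eqP.
  by [].
exists q; split; first exact: cv_conv.
by apply/pseqP; rewrite er r0 addr0.
Qed.

Lemma dvd_opp (a c : ps) : ps_dvd a (- c) <-> ps_dvd a c.
Proof.
split; case=> g [hg /pseqP e]; exists (- g); (split; first exact/cv_conv/cv_opp/conv_cv);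
  apply/pseqP; rewrite psE mulrN -psE -e ?opprK //.
Qed.

Lemma dvd_sw (a c : ps) : ps_dvd (sw a) (sw c) <-> ps_dvd a c.
Proof.
split; case=> g [hg /pseqP e]; exists (sw g); (split; first exact/cv_conv/cv_sw/conv_cv);
  apply/pseqP; rewrite psE.
  by rewrite -(@swK R c) e psE swM.
by rewrite e psE swM.
Qed.

End Final2.

Theorem mainTheorem1 (R : realType) (f l : ps R) :
  ps_conv f -> ~ ps_eq f (ps_zero R) -> ps_at0 f = 0 -> ps_reduced f ->
  ps_conv l -> ps_ord1 l ->
  ps_at0 (jac f l) = 0 ->
  (~ ps_dvd l f <-> ~ ps_dvd l (jac f l)).
Proof.
move=> hf _ f00 _ hl [l00 hl1] _.
suff H : ps_dvd l f <-> ps_dvd l (jac f l) by split => h1 h2; apply: h1; apply/H.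
case: hl1 => h.
  have e1 := dvd_sw l f; have e2 := dvd_sw l (jac f l).
  have e3 := dvd_opp (sw l) (sw (jac f l)); rewrite -(@jac_sw R) in e3.
  have c : ps_dvd (sw l) (sw f) <-> ps_dvd (sw l) (jac (sw f) (sw l)).
    apply: core_equiv => //.
    - exact/cv_conv/cv_sw/conv_cv.
    - exact/cv_conv/cv_sw/conv_cv.
  tauto.
exact: core_equiv.
Qed.
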